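(* Let $F=\{f_i\}_{i=1}^N$ be a tight frame for an $n$-dimensional Hilbert space $\mathcal{H}_n$ and let $p>1$. If $S_F^{-1}F\in\zeta_{\mathcal{N}}^{(1),p}(F)$, then $S_F^{-1}F\in\zeta_{\mathfrak{F}}^{(1),p}(F)$.
   Context: $F$ is tight if $\sum_i|\langle f,f_i\rangle|^2=A\|f\|^2$ for all $f$ and some $A>0$; $S_F$ is the frame operator $S_Ff=\sum_i\langle f,f_i\rangle f_i$ and $S_F^{-1}F=\{S_F^{-1}f_i\}$ the canonical dual. $G=\{g_i\}$ is a dual of $F$ if $f=\sum_i\langle f,f_i\rangle g_i$ for all $f$. For a dual $G$: $\mathrm{AE}_{\mathfrak{F}}^{(1),p}(F,G)=\{\frac1N\sum_i(\|f_i\|\|g_i\|)^p\}^{1/p}$ (the $\ell^p$-average of Frobenius norms of the one-erasure error operators $f\mapsto\langle f,f_i\rangle g_i$), and $\mathrm{AE}_{\mathcal{N}}^{(1),p}(F,G)=\{\frac1N\sum_i\omega(E_i)^p\}^{1/p}$ where $E_if=\langle f,f_i\rangle g_i$ and $\omega(T)=\sup_{\|f\|=1}|\langle Tf,f\rangle|$ is the numerical radius (so $\omega(E_i)=\frac{|\langle f_i,g_i\rangle|+\|f_i\|\|g_i\|}{2}$). $\zeta_{\mathfrak{F}}^{(1),p}(F)$ (resp. $\zeta_{\mathcal{N}}^{(1),p}(F)$) is the set of duals of $F$ minimizing $\mathrm{AE}_{\mathfrak{F}}^{(1),p}(F,\cdot)$ (resp. $\mathrm{AE}_{\mathcal{N}}^{(1),p}(F,\cdot)$)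 over all duals. *)

(* Defs.v *)
From HB Require Import structures.
From mathcomp Require Import all_boot all_order all_algebra.
From mathcomp Require Import all_classical all_reals.
From mathcomp Require Import exp.
From mathcomp Require Import complex.
Set Implicit Arguments. Unset Strict Implicit. Unset Printing Implicit Defensive.
Import Order.TTheory GRing.Theory Num.Theory.
Local Open Scope ring_scope.
Local Open Scope classical_set_scope.

Section FrameDefs.
Variable R : realType.
Local Notation C := (R[i]).

Definition ip n (x y : 'cV[C]_n) : C := \sum_(k < n) x k 0 * Num.conj (y k 0).

Definition vnorm n (x : 'cV[C]_n) : R := Num.sqrt (\sum_(k < n) Normc.normc (x k 0) ^+ 2).

Definition tight_frame n N (F : 'I_N -> 'cV[C]_n) : Prop :=
  exists A : R, 0 < A /\
    forall f : 'cV[C]_n, \sum_(i < N) Normc.normc (ip f (F i)) ^+ 2 = A * vnorm f ^+ 2.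

(* frame operator S_F f = sum_i <f,f_i> f_i, as an n x n matrix *)
Definition frame_op n N (F : 'I_N -> 'cV[C]_n) : 'M[C]_n :=
  \sum_(i < N) (F i *m (map_mx Num.conj (F i))^T).

Definition canonical_dual n N (F : 'I_N -> 'cV[C]_n) : 'I_N -> 'cV[C]_n :=
  fun i => invmx (frame_op F) *m F i.

Definition is_dual n N (F G : 'I_N -> 'cV[C]_n) : Prop :=
  forall f : 'cV[C]_n, f = \sum_(i < N) ip f (F i) *: G i.

(* one-erasure error operator E_i f = <f,f_i> g_i, as a matrix *)
Definition erasure_op n (fi gi : 'cV[C]_n) : 'M[C]_n :=
  gi *m (map_mx Num.conj fi)^T.

Definition numrad n (T : 'M[C]_n) : R :=
  sup [set Normc.normc (ip (T *m f) f) | f in [set f : 'cV[C]_n | vnorm f = 1]].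

Definition AE_frob (p : R) n N (F G : 'I_N -> 'cV[C]_n) : R :=
  (N%:R^-1 * \sum_(i < N) (vnorm (F i) * vnorm (G i)) `^ p) `^ p^-1.

Definition AE_num (p : R) n N (F G : 'I_N -> 'cV[C]_n) : R :=
  (N%:R^-1 * \sum_(i < N) numrad (erasure_op (F i) (G i)) `^ p) `^ p^-1.

End FrameDefs.

Definition zeta_frob (R : realType) (p : R) n N (F G : 'I_N -> 'cV[R[i]]_n) : Prop :=
  is_dual F G /\ forall G', is_dual F G' -> AE_frob p F G <= AE_frob p F G'.

Definition zeta_num (R : realType) (p : R) n N (F G : 'I_N -> 'cV[R[i]]_n) : Prop :=
  is_dual F G /\ forall G', is_dual F G' -> AE_num p F G <= AE_num p F G'.

(* Main.v *)
Require Import Defs.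
From HB Require Import structures.
From mathcomp Require Import all_boot all_order all_algebra.
From mathcomp Require Import all_classical all_reals exp complex.
From mathcomp Require Import ring.
Set Implicit Arguments. Unset Strict Implicit. Unset Printing Implicit Defensive.
Import Order.TTheory GRing.Theory Num.Theory.
Local Open Scope ring_scope.
Local Open Scope complex_scope.
Local Open Scope classical_set_scope.

Section Aux.
Variable R : realType.
Local Notation C := (R[i]).
Local Notation normc := (@Normc.normc R).

Lemma ipDl n (x y z : 'cV[C]_n) : ip (x + y) z = ip x z + ip y z.
Proof. by rewrite /ip -big_split; apply: eq_bigr => k _; rewrite mxE mulrDl. Qed.

Lemma ipBl n (x y z : 'cV[C]_n) : ip (x - y) z = ip x z - ip y z.
Proof. by rewrite /ip -sumrB; apply: eq_bigr => k _; rewrite !mxE mulrBl. Qed.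

Lemma ipZl n c (x z : 'cV[C]_n) : ip (c *: x) z = c * ip x z.
Proof. by rewrite /ip mulr_sumr; apply: eq_bigr => k _; rewrite mxE mulrA. Qed.

Lemma ip_conj n (x y : 'cV[C]_n) : Num.conj (ip x y) = ip y x.
Proof.
rewrite /ip rmorph_sum; apply: eq_bigr => k _.
by rewrite rmorphM /= conjCK mulrC.
Qed.

Lemma ipDr n (x y z : 'cV[C]_n) : ip z (x + y) = ip z x + ip z y.
Proof. by rewrite -ip_conj ipDl rmorphD /= !ip_conj. Qed.

Lemma ipZr n c (x z : 'cV[C]_n) : ip z (c *: x) = Num.conj c * ip z x.
Proof. by rewrite -ip_conj ipZl rmorphM /= !ip_conj. Qed.

Lemma ip_suml n I (r : seq I) (P : pred I) (v : I -> 'cV[C]_n) y :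
  ip (\sum_(i <- r | P i) v i) y = \sum_(i <- r | P i) ip (v i) y.
Proof.
rewrite /ip; under eq_bigr do rewrite summxE mulr_suml.
by rewrite exchange_big.
Qed.

Lemma normc_sqC (z : C) : ((normc z) ^+ 2)%:C = z * Num.conj z.
Proof. rewrite rmorphXn /=. exact: normCK. Qed.

Lemma normc_ge0 (z : C) : 0 <= normc z.
Proof. by case: z => a b; rewrite /Normc.normc sqrtr_ge0. Qed.

Lemma normcC (r : R) : normc r%:C = `|r|.
Proof. by rewrite /Normc.normc /= expr0n /= addr0 sqrtr_sqr. Qed.

Lemma vnorm_ge0 n (x : 'cV[C]_n) : 0 <= vnorm x.
Proof. exact: sqrtr_ge0. Qed.

Lemma vnorm_sq n (x : 'cV[C]_n) : vnorm x ^+ 2 = \sum_k normc (x k 0) ^+ 2.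
Proof. by rewrite sqr_sqrtr // sumr_ge0 // => k _; rewrite sqr_ge0. Qed.

Lemma ip_self n (x : 'cV[C]_n) : ip x x = ((vnorm x) ^+ 2)%:C.
Proof.
rewrite vnorm_sq rmorph_sum; apply: eq_bigr => k _.
exact: (esym (normc_sqC _)).
Qed.

Lemma vnormZ n c (x : 'cV[C]_n) : vnorm (c *: x) = normc c * vnorm x.
Proof.
rewrite /vnorm; under eq_bigr do rewrite mxE Normc.normcM exprMn.
rewrite -mulr_sumr sqrtrM ?sqr_ge0 // sqrtr_sqr ger0_norm //.
exact: normc_ge0.
Qed.

Lemma cs_real n (a b : 'I_n -> R) :
  (\sum_k a k * b k) ^+ 2 <= (\sum_k a k ^+ 2) * (\sum_k b k ^+ 2).
Proof.
have E j k : (a j * b k - a k * b j) ^+ 2 =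
  a j ^+ 2 * b k ^+ 2 + a k ^+ 2 * b j ^+ 2 - 2 * (a j * b j * (a k * b k)).
  by ring.
have key : \sum_j \sum_k (a j * b k - a k * b j) ^+ 2 =
  \sum_j \sum_k (a j ^+ 2 * b k ^+ 2) + \sum_j \sum_k (a k ^+ 2 * b j ^+ 2)
  - 2 * \sum_j \sum_k (a j * b j * (a k * b k)).
  rewrite mulr_sumr -big_split -sumrB /=; apply: eq_bigr => j _.
  by rewrite mulr_sumr -big_split -sumrB /=; apply: eq_bigr => k _; rewrite E.
have h0 : 0 <= \sum_j \sum_k (a j * b k - a k * b j) ^+ 2.
  by apply: sumr_ge0 => j _; apply: sumr_ge0 => k _; rewrite sqr_ge0.
rewrite key in h0.
rewrite [X in _ + X - _](exchange_big) /= in h0.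
rewrite -!big_distrlr /= in h0.
rewrite -subr_ge0.
move: h0; set s := \sum_(i < n) a i * b i.
set A := \sum_(i < n) a i ^+ 2; set B := \sum_(j < n) b j ^+ 2.
move=> h0.
have -> : (\sum_(k < n) a k ^+ 2) * (\sum_(k < n) b k ^+ 2) - s ^+ 2 =
  (A * B + A * B - 2 * (s * s)) / 2 by rewrite /A /B; field.
by rewrite divr_ge0.
Qed.


Lemma ip_le n (x y : 'cV[C]_n) : normc (ip x y) <= vnorm x * vnorm y.
Proof.
have h1 : normc (ip x y) <= \sum_k normc (x k 0) * normc (y k 0).
  rewrite -lecR.
  have -> : (normc (ip x y))%:C = `|ip x y| by [].
  rewrite rmorph_sum /=.
  apply: le_trans (ler_norm_sum _ _ _) _.
  apply: ler_sum => k _; rewrite normrM norm_conjC rmorphM /=.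
  by [].
apply: le_trans h1 _.
set s := \sum_k _.
have s0 : 0 <= s by apply: sumr_ge0 => k _; rewrite mulr_ge0 ?normc_ge0.
rewrite -(ger0_norm s0) -sqrtr_sqr /vnorm -sqrtrM; last first.
  by apply: sumr_ge0 => k _; rewrite sqr_ge0.
apply: ler_wsqrtr; exact: cs_real.
Qed.

Lemma mulT_conj n (g f : 'cV[C]_n) : (map_mx Num.conj g)^T *m f = (ip f g)%:M.
Proof.
apply/matrixP => i j; rewrite !ord1 !mxE /ip /=.
by apply: eq_bigr => k _; rewrite !mxE mulrC.
Qed.

Lemma erasureE n (fi gi f : 'cV[C]_n) : erasure_op fi gi *m f = ip f fi *: gi.
Proof. by rewrite /erasure_op -mulmxA mulT_conj mul_mx_scalar. Qed.

Lemma frame_opE n N (F : 'I_N -> 'cV[C]_n) f :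
  frame_op F *m f = \sum_i ip f (F i) *: F i.
Proof.
rewrite /frame_op mulmx_suml; apply: eq_bigr => i _.
exact: (erasureE (F i) (F i) f).
Qed.

Lemma ip_delta n (v : 'cV[C]_n) j : ip v (delta_mx j 0) = v j 0.
Proof.
rewrite /ip (bigD1 j) //= big1 ?addr0.
  by rewrite mxE !eqxx /= conjC1 mulr1.
by move=> k /negbTE kj; rewrite mxE kj /= conjC0 mulr0.
Qed.

Lemma quad0 n (M : 'M[C]_n) : (forall f, ip (M *m f) f = 0) -> M = 0.
Proof.
move=> H; apply/matrixP => j k; rewrite mxE.
pose e (l : 'I_n) : 'cV[C]_n := delta_mx l 0.
have Me l m : ip (M *m e m) (e l) = M l m.
  by rewrite ip_delta -colE mxE.
have h1 := H (e j + e k).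
rewrite mulmxDr !ipDl !ipDr !Me in h1.
have hjj := H (e j); have hkk := H (e k).
rewrite !Me in hjj hkk.
have h2 := H (e j + 'i *: e k).
rewrite mulmxDr -scalemxAr !ipDl !ipDr !ipZl !ipZr !Me conjCi in h2.
rewrite hjj hkk in h1 h2.
have : 'i * (M j k *+ 2) = 0.
  transitivity (((0 + - 'i * M k j) + ('i * M j k + 'i * (- 'i * 0)))
     - (- 'i) * ((0 + M k j) + (M j k + 0))); last by rewrite h2 h1; ring.
  ring.
move/eqP; rewrite mulf_eq0; case/orP.
  by rewrite (negbTE (neq0Ci _)).
by rewrite mulrn_eq0 /= => /eqP.
Qed.


Lemma numrad_props n (fi gi : 'cV[C]_n) :
  [/\ 0 <= numrad (erasure_op fi gi),
      numrad (erasure_op fi gi) <= vnorm fi * vnorm gi &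
      forall f, vnorm f = 1 ->
        normc (ip (erasure_op fi gi *m f) f) <= numrad (erasure_op fi gi)].
Proof.
rewrite /numrad; set S := (X in sup X).
have ub : ubound S (vnorm fi * vnorm gi).
  move=> y [f /= hf <-]; rewrite erasureE ipZl Normc.normcM.
  apply: ler_pM; rewrite ?normc_ge0 //.
    by apply: le_trans (ip_le _ _) _; rewrite hf mul1r.
  by apply: le_trans (ip_le _ _) _; rewrite hf mulr1.
have B0 : 0 <= vnorm fi * vnorm gi by rewrite mulr_ge0 ?vnorm_ge0.
have hval : forall f, vnorm f = 1 ->
    normc (ip (erasure_op fi gi *m f) f) <= numrad (erasure_op fi gi).
  move=> f hf; apply: sup_upper_bound; last by exists f.
  split; first by exists (normc (ip (erasure_op fi gi *m f) f)); exists f.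
  by exists (vnorm fi * vnorm gi).
case: (pselect (S !=set0)) => [ne|e].
  split => //.
  - case: ne => y [f hf hy]; apply: le_trans (hval f hf); rewrite normc_ge0 //.
  - by apply: ge_sup.
rewrite sup_out; last by case.
split => // f hf; exfalso; apply: e.
by exists (normc (ip (erasure_op fi gi *m f) f)), f.
Qed.

Lemma tight_op n N (F : 'I_N -> 'cV[C]_n) A :
  (forall f : 'cV[C]_n, \sum_(i < N) normc (ip f (F i)) ^+ 2 = A * vnorm f ^+ 2) ->
  frame_op F = (A%:C)%:M.
Proof.
move=> hA; apply/eqP; rewrite -subr_eq0; apply/eqP; apply: quad0 => f.
rewrite mulmxBl ipBl mul_scalar_mx ipZl frame_opE ip_suml.
have -> : \sum_i ip (ip f (F i) *: F i) f = (A * vnorm f ^+ 2)%:C.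
  rewrite -hA rmorph_sum; apply: eq_bigr => i _.
  rewrite ipZl -[ip (F i) f]ip_conj; exact: (esym (normc_sqC _)).
rewrite (ip_self f) rmorphM /=; exact: subrr.
Qed.

Lemma AE_mono (p : R) N (a b : 'I_N -> R) : 0 < p ->
  (forall i, 0 <= a i) -> (forall i, a i <= b i) ->
  (N%:R^-1 * \sum_(i < N) a i `^ p) `^ p^-1 <=
  (N%:R^-1 * \sum_(i < N) b i `^ p) `^ p^-1.
Proof.
move=> hp ha hab.
have hN : 0 <= (N%:R : R)^-1 by rewrite invr_ge0 ler0n.
apply: (ge0_ler_powR (r := p^-1)); rewrite ?invr_ge0 ?(ltW hp) ?nnegrE //.
- by rewrite mulr_ge0 // sumr_ge0 // => i _; rewrite powR_ge0.
- by rewrite mulr_ge0 // sumr_ge0 // => i _; rewrite powR_ge0.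
apply: ler_wpM2l => //; apply: ler_sum => i _.
apply: (ge0_ler_powR (r := p)); rewrite ?(ltW hp) ?nnegrE //.
exact: le_trans (ha i) (hab i).
Qed.


Lemma lower_canon n (fi : 'cV[C]_n) (a : R) : 0 < a ->
  vnorm fi * vnorm (a%:C *: fi) <= numrad (erasure_op fi (a%:C *: fi)).
Proof.
move=> ha.
have [P1 _ P3] := numrad_props fi (a%:C *: fi).
rewrite vnormZ normcC (gtr0_norm ha).
have [r0|rn0] := eqVneq (vnorm fi) 0.
  by rewrite r0 mul0r.
set r := vnorm fi.
have rpos : 0 < r by rewrite lt_def rn0 vnorm_ge0.
pose u := (r^-1)%:C *: fi.
have hu : vnorm u = 1.
  by rewrite vnormZ normcC gtr0_norm ?invr_gt0 // mulVf // gt_eqF.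
apply: le_trans (P3 u hu).
have cr : Num.conj ((r^-1)%:C) = (r^-1)%:C := conjc_real _.
rewrite erasureE ipZl /u ipZl ipZr ipZl (ip_self fi) cr !Normc.normcM !normcC.
rewrite -/r !gtr0_norm ?invr_gt0 ?exprn_gt0 //.
have -> : r^-1 * r ^+ 2 * (r^-1 * (a * r ^+ 2)) = r * (a * r).
  by field; rewrite gt_eqF.
by [].
Qed.

End Aux.

Theorem proposition4p3 (R : realType) (n N : nat) (F : 'I_N -> 'cV[R[i]]_n)
  (p : R) :
  tight_frame F -> 1 < p ->
  zeta_num p F (canonical_dual F) -> zeta_frob p F (canonical_dual F).
Proof.
move=> [A [A0 hA]] p1 [hdual hmin].
have hS := tight_op hA.
have hcd : canonical_dual F = fun i => (A^-1)%:C *: F i.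
  apply: boolp.funext => i.
  by rewrite /canonical_dual hS invmx_scalar mul_scalar_mx fmorphV.
split; first exact: hdual.
move=> G' hG'.
have p0 : 0 < p := lt_trans ltr01 p1.
apply: (@le_trans _ _ (AE_num p F (canonical_dual F))).
  rewrite /AE_frob /AE_num; apply: AE_mono.
  - exact: p0.
  - by move=> i; rewrite mulr_ge0 ?vnorm_ge0.
  - by move=> i; rewrite hcd; apply: lower_canon; rewrite invr_gt0.
apply: le_trans (hmin G' hG') _.
rewrite /AE_num /AE_frob; apply: AE_mono.
- exact: p0.
- by move=> i; have [P1 P2 _] := numrad_props (F i) (G' i).
- by move=> i; have [P1 P2 _] := numrad_props (F i) (G' i).
Qed.
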